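(* Let $\rho$ be a Drinfeld $\mathbb{F}_q[t]$-module over $\overline{k}$. If $u_1,\dots,u_n\in\mathbb{C}_\infty$ are linearly independent over $k$, then the functions $f_{u_1}(t),\dots,f_{u_n}(t)$ are linearly independent over $\mathbb{F}_q(t)$.
   Context: $\mathbb{F}_q$ is the field with $q$ elements, $\theta,t$ independent variables, $k=\mathbb{F}_q(\theta)$, $\mathbb{C}_\infty$ the completion of an algebraic closure of $\mathbb{F}_q((1/\theta))$, $\overline{k}$ the algebraic closure of $k$ in $\mathbb{C}_\infty$. $\tau$ is the $q$-power Frobenius; $\rho$ is an $\mathbb{F}_q$-algebra map $\mathbb{F}_q[t]\to\overline{k}[\tau]$ with $\rho_t=\theta+\kappa_1\tau+\dots+\kappa_r\tau^r$, $\kappa_r\ne0$, acting on $\mathbb{C}_\infty$ by $(\sum c_i\tau^i)(x)=\sum c_ix^{q^i}$. $\exp_\rho(z)=z+\sum_{i\ge1}\alpha_iz^{q^i}$ is the unique entire $\mathbb{F}_q$-linear series with $\exp_\rho(\theta z)=\rho_t(\exp_\rho(z))$. For $u\in\mathbb{C}_\infty$, $f_u(t)=\sum_{m\ge0}\exp_\rho(u/\theta^{m+1})t^m=\sum_{i\ge0}\alpha_iu^{q^i}/(\theta^{q^i}-t)$ ($\alpha_0=1$), a power series in $t$ converging on $|t|_\infty\le1$ that extends to a meromorphic function on $\mathbb{C}_\infty$. *)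

(* Defs.v *)
From HB Require Import structures.
From mathcomp Require Import all_boot all_order all_algebra.
From mathcomp Require Import reals.
Set Implicit Arguments. Unset Strict Implicit. Unset Printing Implicit Defensive.
Import Order.TTheory GRing.Theory Num.Theory.
Local Open Scope ring_scope.

Section Valued.
Variables (R : realType) (C : fieldType) (av : C -> R).

Definition is_nonarch_abs : Prop :=
  [/\ forall x, (av x == 0) = (x == 0),
      forall x, 0 <= av x,
      forall x y, av (x * y) = av x * av y &
      forall x y, av (x + y) <= Num.max (av x) (av y)].

Definition cvg_to (s : nat -> C) (l : C) : Prop :=
  forall eps : R, 0 < eps -> exists N, forall n, (N <= n)%N -> av (s n - l) < eps.

Definition cauchy_seq (s : nat -> C) : Prop :=
  forall eps : R, 0 < eps -> exists N, forall m n,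
    (N <= m)%N -> (N <= n)%N -> av (s m - s n) < eps.

Definition complete_abs : Prop := forall s, cauchy_seq s -> exists l, cvg_to s l.

Definition series_to (a : nat -> C) (l : C) : Prop :=
  cvg_to (fun n => \sum_(i < n) a i) l.
End Valued.

Section K.
Variables (F : finFieldType) (C : fieldType) (iota : {rmorphism F -> C}) (theta : C).

Definition in_k (x : C) : Prop :=
  exists p q : {poly F}, (map_poly iota q).[theta] != 0 /\
    x = (map_poly iota p).[theta] / (map_poly iota q).[theta].

Definition in_kbar (x : C) : Prop :=
  exists P : {poly C}, P != 0 /\ (forall i, in_k P`_i) /\ root P x.
End K.

Definition rho_t (F : finFieldType) (C : fieldType) (theta : C) (r : nat)
  (kappa : nat -> C) (x : C) : C :=
  theta * x + \sum_(1 <= i < r.+1) kappa i * x ^+ (#|F| ^ i).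

(* m-th Taylor coefficient of f_u(t) = sum_m exp_rho(u/theta^{m+1}) t^m *)
Definition f_coeff (C : fieldType) (theta : C) (E : C -> C) (u : C) (m : nat) : C :=
  E (u / theta ^+ m.+1).

(* Main.v *)
Require Import Defs.
From HB Require Import structures.
From mathcomp Require Import all_boot all_order all_algebra all_field.
From mathcomp Require Import reals.
From mathcomp Require Import ring.
Import Order.TTheory GRing.Theory Num.Theory.
Local Open Scope ring_scope.
From mathcomp Require Import zify.
Set Implicit Arguments. Unset Strict Implicit.

Section AV.
Variables (R : realType) (C : fieldType) (av : C -> R).
Hypothesis Hav : is_nonarch_abs av.

Lemma av0 : av 0 = 0.
Proof. case: Hav => h _ _ _; by apply/eqP; rewrite h. Qed.
Lemma av_ge0 x : 0 <= av x.
Proof. by case: Hav. Qed.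
Lemma avM x y : av (x * y) = av x * av y.
Proof. by case: Hav. Qed.
Lemma avD x y : av (x + y) <= Num.max (av x) (av y).
Proof. by case: Hav. Qed.
Lemma av_eq0 x : (av x == 0) = (x == 0).
Proof. by case: Hav. Qed.
Lemma av1 : av 1 = 1.
Proof.
have h1 : av 1 != 0 by rewrite av_eq0 oner_eq0.
have := avM 1 1; rewrite mulr1 => e.
by apply: (mulfI h1); rewrite -e mulr1.
Qed.
Lemma avN x : av (- x) = av x.
Proof.
have hm : av (-1) = 1.
  have := avM (-1) (-1); rewrite mulrNN mulr1 av1 => /esym/eqP.
  rewrite -expr2 sqrp_eq1 ?av_ge0 //; by move/eqP.
by rewrite -mulN1r avM hm mul1r.
Qed.
Lemma avX x n : av (x ^+ n) = av x ^+ n.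
Proof. elim: n => [|n IH]; first by rewrite !expr0 av1. by rewrite !exprS avM IH. Qed.
Lemma avV x : av (x^-1) = (av x)^-1.
Proof.
have [->|nz] := eqVneq x 0; first by rewrite invr0 av0 invr0.
have : av x * av x^-1 = 1 by rewrite -avM divff // av1.
have h : av x != 0 by rewrite av_eq0.
move=> e; by rewrite -[LHS]mul1r -(mulVf h) -mulrA e mulr1.
Qed.
Lemma avDle x y : av (x + y) <= av x + av y.
Proof.
apply: (le_trans (avD x y)); rewrite ge_max; apply/andP; split.
- by rewrite lerDl av_ge0.
- by rewrite lerDr av_ge0.
Qed.
Lemma avB x y : av (x - y) <= Num.max (av x) (av y).
Proof. by rewrite -(avN y) avD. Qed.
Lemma av_sum_le (I : Type) (s : seq I) (P : pred I) (G : I -> C) (B : R) :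
  0 <= B -> (forall i, P i -> av (G i) <= B) -> av (\sum_(i <- s | P i) G i) <= B.
Proof.
move=> B0 h; apply: (big_ind (fun x => av x <= B)); first by rewrite av0.
  by move=> x y hx hy; apply: (le_trans (avD x y)); rewrite ge_max hx hy.
exact: h.
Qed.
Lemma av_add_lt x y : av y < av x -> av (x + y) = av x.
Proof.
move=> h; apply/eqP; rewrite eq_le.
rewrite (le_trans (avD x y)) /=; last by rewrite ge_max lexx ltW.
have := avD (x + y) (- y); rewrite addrK avN le_max => /orP [//|].
by rewrite leNgt h.
Qed.
Lemma av_iota (F : finFieldType) (iota : {rmorphism F -> C}) c :
  c != 0 -> av (iota c) = 1.
Proof.
move=> cnz.
have hF := card_finNzRing_gt1 F.
have e : iota c ^+ #|F| = iota c by rewrite -rmorphXn expf_card.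
have nz : av (iota c) != 0 by rewrite av_eq0 fmorph_eq0.
move: e => /(congr1 av); rewrite avX.
have -> : #|F| = (#|F|.-1).+1 by rewrite prednK // ltnW.
rewrite exprSr => e.
have e2 : av (iota c) ^+ #|F|.-1 = 1.
  by apply: (mulIf nz); rewrite e mul1r.
move/eqP: e2; rewrite pexpr_eq1 ?av_ge0; first by move/eqP.
rewrite -ltnS prednK // ltnW //. done.
Qed.
Lemma av_iota_le (F : finFieldType) (iota : {rmorphism F -> C}) c :
  av (iota c) <= 1.
Proof.
have [->|cnz] := eqVneq c 0; first by rewrite rmorph0 av0 ler01.
by rewrite av_iota.
Qed.
Lemma transc (F : finFieldType) (iota : {rmorphism F -> C}) theta (p : {poly F}) :
  1 < av theta -> p != 0 -> (map_poly iota p).[theta] != 0.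
Proof.
move=> Ht pnz.
set P := map_poly iota p.
have sP : size P = (size p).-1.+1 by rewrite size_map_poly prednK // size_poly_gt0.
rewrite -av_eq0 (horner_coef_wide theta (n := (size p).-1.+1)) ?sP //.
rewrite big_ord_recr /= addrC.
have T0 : 0 < av theta by apply: lt_trans Ht.
have lc : P`_(size p).-1 != 0.
  by rewrite /P coef_map fmorph_eq0 -lead_coefE lead_coef_eq0.
have hl : av (P`_(size p).-1 * theta ^+ (size p).-1) = av theta ^+ (size p).-1.
  by rewrite avM avX /P coef_map av_iota ?mul1r // -lead_coefE lead_coef_eq0.
rewrite av_add_lt hl ?expf_neq0 ?gt_eqF //.
case ed: (size p).-1 => [|d]; first by rewrite big_ord0 av0 expr0 ltr01.
apply: (le_lt_trans (y := av theta ^+ d)); last first.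
  by rewrite exprS ltr_pMl ?exprn_gt0.
apply: av_sum_le; first by rewrite exprn_ge0 // ltW.
move=> i _; rewrite avM avX /P coef_map.
rewrite -[X in _ <= X]mul1r ler_pM ?av_ge0 ?exprn_ge0 ?av_iota_le //.
  by rewrite ltW.
by apply: ler_weXn2l; [rewrite ltW | rewrite -ltnS].
Qed.


Lemma alpha_bound (q : nat) (alpha : nat -> C) (l : C) :
  series_to av (fun i => alpha i * 1 ^+ (q ^ i)) l ->
  exists M, 0 < M /\ forall k, av (alpha k) <= M.
Proof.
move=> /(_ 1 ltr01) [N HN].
exists (1 + \sum_(k < N) av (alpha k)); split.
  by rewrite ltr_wpDr // sumr_ge0 // => *; rewrite av_ge0.
move=> k; case: (ltnP k N) => hk.
  rewrite (bigD1 (Ordinal hk)) //= addrCA ler_wpDr // addr_ge0 //.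
  by rewrite sumr_ge0 // => *; rewrite av_ge0.
have e : alpha k = (\sum_(i < k.+1) alpha i * 1 ^+ (q ^ i) - l)
           - (\sum_(i < k) alpha i * 1 ^+ (q ^ i) - l).
  by rewrite big_ord_recr /= expr1n mulr1 opprB addrA subrK addrC addKr.
rewrite e; apply: (le_trans (avB _ _)); rewrite ge_max.
have hs : 0 <= \sum_(k0 < N) av (alpha k0) by rewrite sumr_ge0 // => *; rewrite av_ge0.
have h1 : forall m, (N <= m)%N -> av (\sum_(i < m) alpha i * 1 ^+ (q ^ i) - l) <= 1 + \sum_(k0 < N) av (alpha k0).
  by move=> m hm; apply: le_trans (ltW (HN m hm)) _; rewrite lerDl.
by rewrite !h1 // leqW.
Qed.

Lemma err_bound (q : nat) (alpha : nat -> C) (E : C -> C) (M : R) :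
  (1 < q)%N -> alpha 0%N = 1 -> (forall k, av (alpha k) <= M) ->
  (forall z, series_to av (fun i => alpha i * z ^+ (q ^ i)) (E z)) ->
  forall z, av z <= 1 -> av (E z - z) <= M * av z ^+ 2.
Proof.
move=> q1 a0 HM HE z z1.
have M0 : 0 <= M by apply: le_trans (HM 0%N); exact: av_ge0.
apply/ler_addgt0Pr => e e0.
have [N HN] := HE z e e0.
set S := \sum_(i < N.+1) alpha i * z ^+ (q ^ i).
have hS : av (S - E z) < e by apply: HN; exact: leqnSn.
have eS : S = z + \sum_(i < N) alpha i.+1 * z ^+ (q ^ i.+1).
  by rewrite /S big_ord_recl /= a0 mul1r expn0 expr1.
have -> : E z - z = - (S - E z) + \sum_(i < N) alpha i.+1 * z ^+ (q ^ i.+1).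
  rewrite eS; ring.
apply: (le_trans (avDle _ _)); rewrite avN addrC lerD //; last exact: ltW.
apply: av_sum_le; first by rewrite mulr_ge0 // exprn_ge0 // av_ge0.
move=> i _; rewrite avM avX ler_pM ?av_ge0 ?exprn_ge0 ?av_ge0 //.
apply: ler_wiXn2l => //; first exact: av_ge0.
rewrite expnS; apply: (leq_trans q1); apply: leq_pmulr; rewrite expn_gt0.
by rewrite (ltn_trans _ q1).
Qed.

Lemma bernoulli_ge (T : R) m : 1 <= T -> 1 + m%:R * (T - 1) <= T ^+ m.
Proof.
move=> T1; elim: m => [|m IH]; first by rewrite mul0r addr0 expr0.
have h : T ^+ m.+1 = T ^+ m + T ^+ m * (T - 1) by rewrite exprS; ring.
rewrite h mulrSr mulrDl addrA lerD //.
by apply: ler_wpM2r; [rewrite subr_ge0 | exact: exprn_ege1].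
Qed.

Lemma grow (T B : R) : 1 < T -> exists m, forall k, (m <= k)%N -> B < T ^+ k.
Proof.
move=> T1.
have T10 : 0 < T - 1 by rewrite subr_gt0.
have x0 : 0 <= `|B| / (T - 1) by rewrite divr_ge0 // ltW.
exists (Num.Def.archi_bound (`|B| / (T - 1))) => k hk.
have h1 := archi_boundP x0.
have h2 : `|B| / (T - 1) < k%:R.
  by apply: (lt_le_trans h1); rewrite ler_nat.
rewrite ltr_pdivrMr // in h2.
apply: (le_lt_trans (ler_norm B)); apply: (lt_le_trans h2).
apply: le_trans _ (@bernoulli_ge T k (ltW T1)); by rewrite lerDr ler01.
Qed.
End AV.
Unset Implicit Arguments. Set Strict Implicit.
Theorem lemma3p5
  (R : realType) (F : finFieldType) (C : closedFieldType)
  (iota : {rmorphism F -> C}) (av : C -> R) (theta : C)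
  (* C is (a model of) C_infinity *)
  (Hav : is_nonarch_abs av) (Hcomp : complete_abs av) (Htheta : 1 < av theta)
  (Hdense : forall (x : C) (eps : R), 0 < eps ->
              exists y, in_kbar iota theta y /\ av (x - y) < eps)
  (* the Drinfeld module rho over kbar *)
  (r : nat) (kappa : nat -> C) (Hr : (0 < r)%N) (Hkr : kappa r != 0)
  (Hk : forall i, (1 <= i <= r)%N -> in_kbar iota theta (kappa i))
  (* its exponential exp_rho = E, E z = sum_i alpha_i z^{q^i}, alpha_0 = 1 *)
  (alpha : nat -> C) (E : C -> C) (Ha0 : alpha 0%N = 1)
  (HE : forall z, series_to av (fun i => alpha i * z ^+ (#|F| ^ i)) (E z))
  (Hfun : forall z, E (theta * z) = rho_t F theta r kappa (E z))
  (* u_1..u_n linearly independent over k *)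
  (n : nat) (u : 'I_n -> C)
  (Hu : forall b : 'I_n -> C, (forall i, in_k iota theta (b i)) ->
          \sum_i b i * u i = 0 -> forall i, b i = 0) :
  (* f_{u_1},...,f_{u_n} linearly independent over F_q(t) (denominators cleared) *)
  forall a : 'I_n -> {poly F},
    (forall m : nat,
       \sum_i \sum_(j < m.+1) iota (a i)`_j * f_coeff theta E (u i) (m - j) = 0) ->
    forall i, a i = 0.
Proof.
move=> a Hm.
have av0 := av0 Hav. have av_ge0 := av_ge0 Hav. have avM := avM Hav.
have avN := avN Hav. have avX := avX Hav. have avV := avV Hav.
have av_iota_le := av_iota_le Hav iota.
set q := #|F|.
have q1 : (1 < q)%N by apply: card_finNzRing_gt1.
have [M [M0 HM]] := alpha_bound Hav (HE 1).
have herr := err_bound Hav q1 Ha0 HM HE.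
set T := av theta.
have T0 : 0 < T by apply: lt_trans Htheta.
have th0 : theta != 0 by rewrite -(av_eq0 Hav) gt_eqF.
set D := \max_i size (a i).
have hD : forall i, (size (a i) <= D)%N by move=> i; exact: leq_bigmax.
set P := fun i => map_poly iota (a i).
set b := fun i => (P i).[theta].
set S := \sum_i b i * u i.
suff Sb : S = 0.
  move=> i; apply/eqP; apply: contraT => nz.
  have := transc Hav iota Htheta nz.
  rewrite -/(P i) -/(b i) (Hu b _ Sb i) ?eqxx // => k.
  exists (a k), 1; split; first by rewrite rmorph1 hornerC oner_neq0.
  by rewrite rmorph1 hornerC divr1.
apply/eqP; apply: contraT => Snz.
have s0 : 0 < av S by rewrite lt_def (av_eq0 Hav) Snz av_ge0.
set U := 1 + \sum_i av (u i).
have hsu : 0 <= \sum_i av (u i) by rewrite sumr_ge0 // => *; exact: av_ge0.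
have U1 : 1 <= U by rewrite lerDl.
have U0 : 0 < U by apply: lt_le_trans U1.
have hU : forall i, av (u i) <= U.
  move=> i; rewrite /U (bigD1 i) //= addrCA ler_wpDr // addr_ge0 //.
  by rewrite sumr_ge0 // => *; exact: av_ge0.
set Y := T ^+ D.
set K := Y * M * U ^+ 2.
have [m Hm0] := grow (Num.max U (K / av S)) Htheta.
set X := T ^+ m.+1.
have hX : Num.max U (K / av S) < X by apply: Hm0; exact: leqnSn.
rewrite gt_max in hX; case/andP: hX => hUX hKX.
have X0 : 0 < X by apply: lt_trans hUX.
have H0 := Hm (D + m)%N.
rewrite /f_coeff in H0.
pose A' := \sum_i \sum_(j < (D + m)%N.+1) iota (a i)`_j * (u i / theta ^+ (D + m - j)%N.+1).
pose B' := \sum_i \sum_(j < (D + m)%N.+1) iota (a i)`_j *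
   (E (u i / theta ^+ (D + m - j)%N.+1) - u i / theta ^+ (D + m - j)%N.+1).
have Hsplit : A' + B' = 0.
  apply: etrans _ H0; rewrite /A' /B' -big_split; apply: eq_bigr => i _; rewrite -big_split.
  by apply: eq_bigr => j _ /=; rewrite -mulrDr addrC subrK.
have HA : theta ^+ (D + m)%N.+1 * A' = S.
  rewrite /A' mulr_sumr /S; apply: eq_bigr => i _.
  rewrite mulr_sumr /b (horner_coef_wide theta (n:=(D+m)%N.+1)); last first.
    by rewrite size_map_poly; apply: leq_trans (hD i) _; rewrite leqW // leq_addr.
  rewrite mulr_suml; apply: eq_bigr => j _.
  rewrite /P coef_map.
  have ej : ((D + m)%N.+1 = j + (D + m - j)%N.+1)%N by rewrite addnS subnKC // -ltnS ltn_ord.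
  have nz : theta ^+ (D + m - j)%N.+1 != 0 by rewrite expf_neq0.
  rewrite {1}ej exprD; field; exact: nz.
have HB : av B' <= M * (U / X) ^+ 2.
  have B0 : 0 <= M * (U / X) ^+ 2 by apply: mulr_ge0; [exact: ltW | apply: exprn_ge0; apply: divr_ge0; exact: ltW].
  apply: (av_sum_le Hav) => // i _; apply: (av_sum_le Hav) => // j _.
  case: (ltnP j (size (a i))) => hj; last first.
    by rewrite nth_default // rmorph0 mul0r av0.
  rewrite avM -[Z in _ <= Z]mul1r.
  apply: ler_pM; rewrite ?av_ge0 ?av_iota_le //.
  have hz : av (u i / theta ^+ (D + m - j)%N.+1) <= U / X.
    rewrite avM avV avX; apply: ler_pM; rewrite ?av_ge0 ?invr_ge0 ?exprn_ge0 ?av_ge0 ?hU //.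
    rewrite lef_pV2 ?posrE ?exprn_gt0 //; apply: ler_weXn2l; first exact: ltW.
    rewrite ltnS -addnBAC ?leq_addl //; exact: leq_trans (ltnW hj) (hD i).
  have hz1 : U / X <= 1 by rewrite ler_pdivrMr // mul1r ltW.
  apply: le_trans (herr _ (le_trans hz hz1)) _.
  apply: ler_wpM2l; first exact: ltW.
  by rewrite !expr2 ler_pM // av_ge0.
have eA : A' = - B' by apply/eqP; rewrite -addr_eq0 Hsplit.
have : av S <= K / X.
  rewrite -HA eA avM avN avX.
  have eT : T ^+ (D + m)%N.+1 = Y * X by rewrite /Y /X -exprD addnS.
  rewrite eT; apply: (le_trans (y := Y * X * (M * (U / X) ^+ 2))).
    by apply: ler_wpM2l => //; rewrite mulr_ge0 // exprn_ge0 // ltW.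
  rewrite le_eqVlt; apply/orP; left; apply/eqP; rewrite /K; field.
  by rewrite gt_eqF.
rewrite ltr_pdivrMr // in hKX.
have : K / X < av S by rewrite ltr_pdivrMr // mulrC.
by move=> h1 h2; have := lt_le_trans h1 h2; rewrite ltxx.
Qed.
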